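(* Let $W=\mathfrak{S}_n$, $1\le c\le n-2$, and let $w_2\in\mathfrak{S}_n$ with $w_2^2=1$. Suppose $\ell(s_{c+1}s_cw_2s_cs_{c+1})=\ell(w_2)+4$, $s_cw_2\ne w_2s_c$, $s_{c+1}s_cw_2s_c\neq s_cw_2s_cs_{c+1}$ and $s_{c+1}w_2s_cs_{c+1}<w_2s_cs_{c+1}$. Then $s_{c+1}w_2<w_2$, and either $s_{c+1}w_2=w_2s_{c+1}$ or $s_{c+1}w_2s_{c+1}<s_{c+1}w_2$.
   Context: $s_j=(j,j+1)$; $\ell$ is the Coxeter length of $\mathfrak{S}_n$ and $<$ is the Bruhat order. *)

(* Defs.v *)
From mathcomp Require Import all_boot all_order all_fingroup.
From Stdlib Require Import Relations.
Set Implicit Arguments. Unset Strict Implicit. Unset Printing Implicit Defensive.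

(* Symmetric group S_n realised as 'S_n = {perm 'I_n}; points are 0..n-1,
   so the paper's point k corresponds to the ordinal k-1. *)

(* Simple transposition s_j = (j, j+1) (paper's 1-based points), defined for
   1 <= j <= n-1; (junk value 1 otherwise). *)
Definition s (n j : nat) : 'S_n :=
  match @insub _ (fun k => k < n) _ j.-1, @insub _ (fun k => k < n) _ j with
  | Some a, Some b => tperm a b
  | _, _ => 1%g
  end.

Definition coxlen (n : nat) (w : 'S_n) : nat :=
  #|[set p : 'I_n * 'I_n | (p.1 < p.2) && (w p.2 < w p.1)]|.

Definition bruhat_step (n : nat) (u v : 'S_n) : Prop :=
  exists i j : 'I_n, i != j /\ v = (u * tperm i j)%g /\ coxlen u < coxlen v.

Definition bruhat_le (n : nat) : relation 'S_n :=
  clos_refl_trans 'S_n (@bruhat_step n).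

Definition bruhat_lt (n : nat) (u v : 'S_n) : Prop := bruhat_le u v /\ u <> v.

(* Main.v *)
Require Import Defs.
From mathcomp Require Import all_boot all_order all_fingroup zify.
From Stdlib Require Import Relations.
Set Implicit Arguments. Unset Strict Implicit. Unset Printing Implicit Defensive.

Lemma ordeqE n (a b : 'I_n) : (a == b) = (nat_of_ord a == nat_of_ord b).
Proof. by []. Qed.
Lemma ordneq n (a b : 'I_n) : a <> b -> nat_of_ord a != nat_of_ord b.
Proof. by move=> h; apply/eqP => /val_inj. Qed.

Ltac tpd := repeat match goal with |- context[fun_of_perm (tperm ?i ?j) ?k] =>
  case: (tpermP i j k) => [/(congr1 (@nat_of_ord _)) ?|/(congr1 (@nat_of_ord _)) ?|/ordneq ? /ordneq ?] end;
  rewrite ?ordeqE.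

Definition invs n (x : 'S_n) := [set p : 'I_n * 'I_n | (p.1 < p.2) && (x p.2 < x p.1)].

Lemma coxlenE n (x : 'S_n) : coxlen x = #|invs x|.
Proof. by []. Qed.

Lemma tperm_lt n (i j p1 p2 : 'I_n) : i.+1 = j -> p1 < p2 -> ~~ ((p1 == i) && (p2 == j)) ->
  tperm i j p1 < tperm i j p2.
Proof. move=> hij; tpd; lia. Qed.

Lemma tperm_ne n (i j p1 p2 : 'I_n) : i.+1 = j -> p1 < p2 ->
  ~~ ((tperm i j p1 == i) && (tperm i j p2 == j)).
Proof. move=> hij; tpd; lia. Qed.

Lemma len_up n (i j : 'I_n) (y : 'S_n) : i.+1 = j -> y i < y j ->
  coxlen (tperm i j * y)%g = (coxlen y).+1.
Proof.
move=> hij hy; rewrite !coxlenE.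
pose G (p : 'I_n * 'I_n) := (tperm i j p.1, tperm i j p.2).
have Ginj : injective G.
  by move=> [p1 p2] [q1 q2] [/perm_inj -> /perm_inj ->].
have nA : (i, j) \notin invs y.
  by rewrite inE /= negb_and; apply/orP; right; rewrite -leqNgt ltnW.
have -> : invs (tperm i j * y)%g = (i, j) |: (G @: invs y).
  apply/setP => [[q1 q2]]; rewrite !inE /= !permM.
  case: (boolP ((q1, q2) == (i, j))) => [/eqP [-> ->]|hq] /=.
    by rewrite tpermL tpermR hy; apply/andP; split => //; lia.
  rewrite xpair_eqE in hq.
  apply/idP/idP.
  - move=> /andP [h1 h2]; apply/imsetP; exists (G (q1, q2)).
      by rewrite inE /G /= h2 andbT tperm_lt.
    by rewrite /G /= !tpermK.
  - move=> /imsetP [[p1 p2]]; rewrite inE /= => /andP [h1 h2] [-> ->].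
    rewrite !tpermK h2 andbT tperm_lt //.
    by apply/negP => /andP [/eqP e1 /eqP e2]; move: nA; rewrite inE -e1 -e2 h1 h2.
rewrite cardsU1 card_imset //.
suff -> : (i, j) \notin G @: invs y by [].
apply/imsetP => [[[p1 p2]]]; rewrite inE /= => /andP [h1 _] [e1 e2].
by move: (tperm_ne hij h1); rewrite -e1 -e2 !eqxx.
Qed.

Lemma perm_neq n (y : 'S_n) (i j : 'I_n) : i <> j -> nat_of_ord (y i) <> y j.
Proof. by move=> h /val_inj /perm_inj. Qed.

Lemma len_down n (i j : 'I_n) (y : 'S_n) : i.+1 = j -> y j < y i ->
  coxlen y = (coxlen (tperm i j * y)%g).+1.
Proof.
move=> hij hy; rewrite -(len_up (y:=(tperm i j * y)%g) hij); first by rewrite mulgA tperm2 mul1g.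
by rewrite !permM tpermL tpermR.
Qed.

Lemma len_inv n (y : 'S_n) : coxlen (y^-1)%g = coxlen y.
Proof.
suff H : forall z : 'S_n, coxlen z <= coxlen (z^-1)%g.
  by apply/eqP; rewrite eqn_leq H -{2}(invgK y) H.
move=> z; rewrite !coxlenE.
pose H (p : 'I_n * 'I_n) := (z p.2, z p.1).
have Hinj : injective H by move=> [p1 p2] [q1 q2] [/perm_inj -> /perm_inj ->].
rewrite -(card_imset _ Hinj); apply: subset_leq_card; apply/subsetP => q.
move=> /imsetP [[p1 p2]]; rewrite inE /= => /andP [h1 h2] ->.
by rewrite inE /= h2 !permK.
Qed.

Lemma len_upL n (i j : 'I_n) (y : 'S_n) : i.+1 = j -> (y^-1)%g i < (y^-1)%g j ->
  coxlen (y * tperm i j)%g = (coxlen y).+1.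
Proof.
move=> hij hy; rewrite -len_inv invgM tpermV len_up // len_inv //.
Qed.

Lemma len_downL n (i j : 'I_n) (y : 'S_n) : i.+1 = j -> (y^-1)%g j < (y^-1)%g i ->
  coxlen y = (coxlen (y * tperm i j)%g).+1.
Proof.
move=> hij hy; rewrite -len_inv -(len_inv (y * _)) invgM tpermV; exact: len_down.
Qed.

Lemma len_le n (i j : 'I_n) (y : 'S_n) : i.+1 = j ->
  coxlen (tperm i j * y)%g <= (coxlen y).+1.
Proof.
move=> hij; have ne : i <> j by move=> e; move: hij; rewrite e; lia.
have := perm_neq (y:=y) ne; case: (ltngtP (y i) (y j)) => h hn.
- by rewrite len_up.
- by rewrite (len_down hij h); lia.
- lia.
Qed.

Lemma len_leL n (i j : 'I_n) (y : 'S_n) : i.+1 = j ->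
  coxlen (y * tperm i j)%g <= (coxlen y).+1.
Proof.
by move=> hij; rewrite -len_inv invgM tpermV -(len_inv y) len_le.
Qed.

Lemma bruhat_len n (u v : 'S_n) : bruhat_le u v -> u = v \/ coxlen u < coxlen v.
Proof.
elim => [x y [i [j [_ [_ h]]]]|x|x y z _ [->|h1] _ [<-|h2]]; auto.
by right; lia.
Qed.

Lemma bruhat_ltlen n (u v : 'S_n) : bruhat_lt u v -> coxlen u < coxlen v.
Proof. by move=> [/bruhat_len [] // ]. Qed.

Lemma sE n j (a b : 'I_n) : nat_of_ord a = j.-1 -> nat_of_ord b = j -> s n j = tperm a b.
Proof.
move=> ha hb; rewrite /s.
have h1 : j.-1 < n by rewrite -ha.
have h2 : j < n by rewrite -hb.
rewrite (insubT (fun k => k < n) h1) (insubT (fun k => k < n) h2).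
by congr tperm; apply: val_inj.
Qed.

Ltac tpd2 := repeat match goal with |- context[@fun_of_perm _ (@tperm _ ?i ?j) ?k] =>
  lazymatch k with context[@fun_of_perm _ (@tperm _ _ _) _] => fail | _ => idtac end;
  case: (tpermP i j k) => [/(congr1 (@nat_of_ord _)) ?|/(congr1 (@nat_of_ord _)) ?|/ordneq ? /ordneq ?] end;
  rewrite ?ordeqE.

Unset Implicit Arguments.
Theorem lemma2p17 (n c : nat) (w2 : 'S_n) :
  1 <= c -> c <= n - 2 ->
  (w2 * w2 = 1)%g ->
  coxlen (s n c.+1 * s n c * w2 * s n c * s n c.+1)%g = coxlen w2 + 4 ->
  (s n c * w2 <> w2 * s n c)%g ->
  (s n c.+1 * s n c * w2 * s n c <> s n c * w2 * s n c * s n c.+1)%g ->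
  bruhat_lt (s n c.+1 * w2 * s n c * s n c.+1)%g (w2 * s n c * s n c.+1)%g ->
  bruhat_lt (s n c.+1 * w2)%g w2 /\
  ((s n c.+1 * w2 = w2 * s n c.+1)%g \/
   bruhat_lt (s n c.+1 * w2 * s n c.+1)%g (s n c.+1 * w2)%g).
Proof.
move=> hc1 hc2 hinv hlen _ _ hbr.
have ha : c.-1 < n by lia.
have hb : c < n by lia.
have hd : c.+1 < n by lia.
set a := Ordinal ha; set b := Ordinal hb; set d := Ordinal hd.
have hab : a.+1 = b by rewrite /= ; lia.
have hbd : b.+1 = d by [].
rewrite (@sE n c a b) // (@sE n c.+1 b d) // in hlen hbr *.
set w := w2 in hinv hlen hbr *.
have ww : forall k, w (w k) = k by move=> k; rewrite -permM hinv perm1.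
have wi : (w^-1 = w)%g by rewrite -[LHS]mulg1 -hinv mulgA mulVg mul1g.
have hpq : w a < w b.
  case: (ltngtP (w a) (w b)) => // h.
  - have e := len_down hab h.
    have l2 := len_leL (tperm a b * w)%g hab.
    have l3 := len_le (tperm a b * w * tperm a b)%g hbd.
    have l4 := len_leL (tperm b d * (tperm a b * w * tperm a b))%g hbd.
    rewrite !mulgA in l3 l4. set X1 := coxlen (tperm a b * w * tperm a b)%g in l2 l3. set X2 := coxlen (tperm b d * tperm a b * w * tperm a b)%g in l3 l4. set X3 := coxlen (tperm b d * tperm a b * w * tperm a b * tperm b d)%g in l4 hlen. set X4 := coxlen (tperm a b * w)%g in l2 e. exfalso; lia.
  - by move/val_inj/perm_inj: h => /(congr1 (@nat_of_ord _)) /=; lia.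
have hl := bruhat_ltlen hbr.
have h5 : (w * tperm a b * tperm b d)%g d < (w * tperm a b * tperm b d)%g b.
  case: (ltngtP ((w * tperm a b * tperm b d)%g d) ((w * tperm a b * tperm b d)%g b)) => // h.
  - have := len_up hbd h; rewrite !mulgA => e.
    set X1 := coxlen (tperm b d * w * tperm a b * tperm b d)%g in hl e.
    set X2 := coxlen (w * tperm a b * tperm b d)%g in hl e.
    exfalso; lia.
  - exfalso; move: h; apply: perm_neq => e; move: hbd; rewrite e; lia.
rewrite !permM in h5.
have hqr : w d < w b.
  case: (ltngtP (w d) (w b)) => // h.
  - exfalso.
    have hqa : nat_of_ord (w b) = a by move: h5 h; tpd2; lia.
    have e1 : w b = a by apply: val_inj.
    have e2 := ww b; rewrite e1 in e2.
    by move: hpq; rewrite e2 e1 /=; lia.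
  - exfalso; move: h; apply: perm_neq => e; move: hbd; rewrite e; lia.
have bd : b != d by rewrite ordeqE /=; lia.
split.
  split; last first.
    move/(congr1 (fun p : 'S_n => p b)); rewrite permM tpermL => /perm_inj e.
    by move: bd; rewrite e eqxx.
  apply: rt_step; exists (w b), (w d); split.
    by rewrite ordeqE; apply/eqP => e; move: hqr; rewrite e ltnn.
  split.
    by rewrite -tpermJ /conjg !mulgA mulgK tperm2 mul1g.
  by rewrite (len_down hbd hqr); exact: ltnSn.
case: (boolP ((w b == d) && (w d == b))) => [/andP [/eqP e1 /eqP e2]| hn].
  left; apply/permP => k; rewrite !permM.
  case: (tpermP b d k) => [->|->|n1 n2].
  - by rewrite e1 e2 tpermR.
  - by rewrite e1 e2 tpermL.
  - rewrite tpermD //.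
      by apply/eqP => e; apply: n2; rewrite -(ww k) -e e1.
    by apply/eqP => e; apply: n1; rewrite -(ww k) -e e2.
right.
have hlt0 : tperm b d (w d) < tperm b d (w b).
  have hn' : ~~ ((nat_of_ord (w b) == d) && (nat_of_ord (w d) == b)) by exact: hn.
  by move: hqr hn'; tpd2; lia.
have hlt : ((tperm b d * w)^-1)%g d < ((tperm b d * w)^-1)%g b.
  by rewrite invgM tpermV wi !permM; exact: hlt0.
have hl2 := len_downL hbd hlt.
split; last first.
  move=> e; rewrite e in hl2; exact: (n_Sn _ hl2).
apply: rt_step; exists b, d; split => //.
split; first by rewrite -mulgA tperm2 mulg1.
by rewrite hl2; exact: ltnSn.
Qed.
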